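(* Let $\bm S\in\mathcal{S}^N$ with eigendecomposition $\bm S=\bm Q\bm\Lambda\bm Q^T$, $\bm Q\in{\rm O}(N)$, $\bm\Lambda\in\mathcal{D}_N$ with non-increasing diagonal entries. Let $\bm\Lambda_o\in\mathcal{D}_N$ have non-increasing diagonal entries, let $0\le\epsilon<\infty$, and let $\mathcal{M}_\epsilon:=\{\bm V(\bm\Lambda_o+\bm\Lambda_\epsilon)\bm V^T:\ \bm V\in{\rm O}(N),\ \bm\Lambda_\epsilon\in\mathcal{D}_N,\ \Vert\bm\Lambda_\epsilon\Vert_2\le\epsilon\}$. Let $$\bm\Lambda_\epsilon^*:=\arg\min_{\bm\Lambda_\epsilon\in\mathcal{D}_N,\ \Vert\bm\Lambda_\epsilon\Vert_2\le\epsilon}\Vert\bm\Lambda-\bm\Lambda_o-\bm\Lambda_\epsilon\Vert_{\rm F}.$$ Then $\bm Q(\bm\Lambda_o+\bm\Lambda_\epsilon^* )\bm Q^T$ is a best approximant of $\bm S$ in $\mathcal{M}_\epsilon$ in the Frobenius norm, i.e., it belongs to $\mathcal{M}_\epsilon$ and minimizes $\Vert\bm S-\bm M\Vert_{\rm F}$ over $\bm M\in\mathcal{M}_\epsilon$.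
   Context: $\mathcal{S}^N$: real symmetric $N\times N$ matrices; $\mathcal{D}_N$: real $N\times N$ diagonal matrices; ${\rm O}(N)$: $N\times N$ orthogonal matrices; $\Vert\cdot\Vert_2$: spectral norm; $\Vert\cdot\Vert_{\rm F}$: Frobenius norm; non-increasing diagonal means $[\bm\Lambda]_{ii}\ge[\bm\Lambda]_{jj}$ for $i<j$. *)

(* Defs.v *)
From HB Require Import structures.
From mathcomp Require Import all_boot all_order all_algebra.
Set Implicit Arguments. Unset Strict Implicit. Unset Printing Implicit Defensive.
Import Order.TTheory GRing.Theory Num.Theory.
Local Open Scope ring_scope.

Definition sym_mx (R : rcfType) (N : nat) (A : 'M[R]_N) : Prop := A^T = A.

Definition orth_mx (R : rcfType) (N : nat) (Q : 'M[R]_N) : Prop :=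
  Q *m Q^T = 1%:M /\ Q^T *m Q = 1%:M.

Definition is_diagonal (R : rcfType) (N : nat) (D : 'M[R]_N) : Prop := is_diag_mx D.

Definition nonincr_diag (R : rcfType) (N : nat) (D : 'M[R]_N) : Prop :=
  forall i j : 'I_N, (i <= j)%N -> D j j <= D i i.

Definition frob (R : rcfType) (m n : nat) (A : 'M[R]_(m, n)) : R :=
  Num.sqrt (\sum_(i < m) \sum_(j < n) A i j ^+ 2).

Definition vnorm (R : rcfType) (N : nat) (x : 'cV[R]_N) : R := frob x.

(* ||A||_2 <= eps for the spectral (operator 2-)norm:
   ||A||_2 = sup_{x <> 0} ||A x|| / ||x||, so ||A||_2 <= eps iff
   ||A x|| <= eps ||x|| for every x. *)
Definition spec_norm_le (R : rcfType) (N : nat) (A : 'M[R]_N) (eps : R) : Prop :=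
  forall x : 'cV[R]_N, vnorm (A *m x) <= eps * vnorm x.

Definition Meps (R : rcfType) (N : nat) (Lo : 'M[R]_N) (eps : R) (M : 'M[R]_N) : Prop :=
  exists V Le : 'M[R]_N,
    [/\ orth_mx V, is_diagonal Le, spec_norm_le Le eps &
        M = V *m (Lo + Le) *m V^T].

(* Main.v *)
Require Import Defs.
From HB Require Import structures.
From mathcomp Require Import all_boot all_order all_algebra.
From mathcomp Require Import ring lra zify.
Import Order.TTheory GRing.Theory Num.Theory.
Local Open Scope ring_scope.
Set Implicit Arguments. Unset Strict Implicit.
Section S.
Variable R : rcfType.
Definition G (eps x : R) : R :=
  if eps < x then (x - eps) ^+ 2 else if x < - eps then (x + eps) ^+ 2 else 0.
Lemma Gle (eps x e : R) : 0 <= eps -> `|e| <= eps -> G eps x <= (x - e) ^+ 2.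
Proof.
move=> he; rewrite /G ler_norml => /andP[h1 h2].
case: ltP => h3.
  have : 0 <= (eps - e) * ((x - e) + (x - eps)) by apply: mulr_ge0; lra.
  nra.
case: ltP => h4.
  have : 0 <= (eps + e) * (- (x - e) - (x + eps)) by apply: mulr_ge0; lra.
  nra.
exact: sqr_ge0.
Qed.
Lemma Gmonge (eps a a' b b' : R) : 0 <= eps -> a <= a' -> b <= b' ->
  G eps (a' - b') + G eps (a - b) <= G eps (a' - b) + G eps (a - b').
Proof.
move=> he h1 h2; rewrite /G.
case: (ltP eps (a' - b')) => ?; case: (ltP (a' - b') (- eps)) => ?; case: (ltP eps (a - b)) => ?; case: (ltP (a - b) (- eps)) => ?; case: (ltP eps (a' - b)) => ?; case: (ltP (a' - b) (- eps)) => ?; case: (ltP eps (a - b')) => ?; case: (ltP (a - b') (- eps)) => ?; nra.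
Qed.


Definition clamp (eps x : R) : R :=
  if eps < x then eps else if x < - eps then - eps else x.
Lemma clampG (eps x : R) : 0 <= eps -> (x - clamp eps x) ^+ 2 = G eps x.
Proof. by move=> he; rewrite /clamp /G; case: ifP => _; [|case: ifP => _]; rewrite ?opprK ?subrr ?expr0n. Qed.
Lemma clamp_le (eps x : R) : 0 <= eps -> `|clamp eps x| <= eps.
Proof.
move=> he; rewrite /clamp ler_norml; case: ltP => h1; [lra|]; case: ltP => h2; lra.
Qed.

Section Core.
Variables (N : nat) (eps : R) (lam lo : nat -> R).
Hypothesis he : 0 <= eps.
Hypothesis hlam : forall m k, (m <= k < N)%N -> lam k <= lam m.
Hypothesis hlo : forall m k, (m <= k < N)%N -> lo k <= lo m.
Definition h i j := G eps (lam i - lo j).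
Definition u n := \sum_(k < n) (h k.+1 k - h k k).

Lemma monge i i' j j' : (i <= i' < N)%N -> (j <= j' < N)%N ->
  h i j + h i' j' <= h i j' + h i' j.
Proof.
move=> /andP[h1 h2] /andP[h3 h4]; rewrite /h.
apply: Gmonge => //.
  by apply: hlam; rewrite h1 h2.
by apply: hlo; rewrite h3 h4.
Qed.

Lemma uS n : u n.+1 = u n + (h n.+1 n - h n n).
Proof. by rewrite /u big_ord_recr. Qed.

Lemma pot i j : (i < N)%N -> (j < N)%N -> u i - u j <= h i j - h j j.
Proof.
move=> hi hj; case: (leqP j i) => hji.
  rewrite -(subnKC hji) in hi *.
  elim: (i - j)%N hi => [|d IH] hd; first by rewrite addn0 !subrr.
  have hd' : (j + d < N)%N by rewrite (leq_trans _ hd) // addnS.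
  have hd2 : ((j + d).+1 < N)%N by rewrite -addnS.
  have := IH hd'; rewrite addnS uS.
  have hm := @monge (j + d) (j + d).+1 j (j + d).
  have {hm}hm := hm ltac:(apply/andP; split; lia) ltac:(apply/andP; split; lia).
  lra.
rewrite -(subnKC (ltnW hji)) in hj *.
elim: (j - i)%N hj => [|d IH] hd; first by rewrite addn0 !subrr.
have hd' : (i + d < N)%N by rewrite (leq_trans _ hd) // addnS.
have hd2 : ((i + d).+1 < N)%N by rewrite -addnS.
have := IH hd'; rewrite addnS uS.
have hm := @monge i (i + d).+1 (i + d) (i + d).+1.
have {hm}hm := hm ltac:(apply/andP; split; lia) ltac:(apply/andP; split; lia).
lra.
Qed.

Lemma core (W : 'M[R]_N) (e : 'I_N -> R) :
  (forall i, \sum_j W i j ^+ 2 = 1) -> (forall j, \sum_i W i j ^+ 2 = 1) ->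
  (forall j, `|e j| <= eps) ->
  \sum_(i < N) h i i <= \sum_i \sum_j W i j ^+ 2 * (lam i - lo j - e j) ^+ 2.
Proof.
move=> hr hc hE.
apply: (@le_trans _ _ (\sum_(i < N) \sum_(j < N) W i j ^+ 2 * (u (i : 'I_N) + (h (j : 'I_N) j - u j)))).
  rewrite [X in _ <= X](eq_bigr (fun i : 'I_N => \sum_(j < N) (u i * W i j ^+ 2 + W i j ^+ 2 * (h j j - u j)))); last first.
    by move=> i _; apply: eq_bigr => j _; rewrite mulrDr mulrC.
  under [X in _ <= X]eq_bigr => i _ do rewrite big_split /=.
  rewrite big_split /= [X in _ <= _ + X]exchange_big /=.
  rewrite [X in _ <= X + _](eq_bigr (fun i : 'I_N => u i)); last by move=> i _; rewrite -mulr_sumr hr mulr1.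
  rewrite [X in _ <= _ + X](eq_bigr (fun j : 'I_N => h j j - u j)); last by move=> j _; rewrite -mulr_suml hc mul1r.
  by rewrite -big_split /=; apply: ler_sum => i _; lra.
apply: ler_sum => i _; apply: ler_sum => j _.
apply: ler_wpM2l; first exact: sqr_ge0.
apply: (le_trans _ (@Gle eps (lam i - lo j) (e j) he (hE j))).
have := pot (ltn_ord i) (ltn_ord j); rewrite /h; lra.
Qed.
End Core.

Definition sq (m n : nat) (A : 'M[R]_(m, n)) : R := \sum_i \sum_j A i j ^+ 2.

Lemma mxBE m n (A B : 'M[R]_(m, n)) i j : (A - B) i j = A i j - B i j.
Proof. by rewrite !mxE. Qed.

Lemma sq_tr n (A : 'M[R]_n) : sq A = \tr (A *m A^T).
Proof.
rewrite /sq /mxtrace; apply: eq_bigr => i _; rewrite mxE; apply: eq_bigr => j _.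
by rewrite !mxE expr2.
Qed.

Lemma sq_mulr n (A U : 'M[R]_n) : U *m U^T = 1%:M -> sq (A *m U) = sq A.
Proof. by move=> hU; rewrite !sq_tr trmx_mul mulmxA -(mulmxA A) hU mulmx1. Qed.

Lemma sq_mull n (A U : 'M[R]_n) : U *m U^T = 1%:M -> sq (U^T *m A) = sq A.
Proof.
move=> hU; rewrite !sq_tr trmx_mul trmxK mxtrace_mulC.
by rewrite !mulmxA -(mulmxA _ U) hU mulmx1 mxtrace_mulC.
Qed.

Lemma mul_diagl n p (L : 'M[R]_n) (W : 'M[R]_(n, p)) i j : is_diag_mx L -> (L *m W) i j = L i i * W i j.
Proof.
move=> /is_diag_mxP hL; rewrite mxE (bigD1 i) //= big1 ?addr0 // => k hk.
by rewrite hL ?mul0r // eq_sym.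
Qed.

Lemma mul_diagr n (W D : 'M[R]_n) i j : is_diag_mx D -> (W *m D) i j = W i j * D j j.
Proof.
move=> /is_diag_mxP hD; rewrite mxE (bigD1 j) //= big1 ?addr0 // => k hk.
by rewrite hD ?mulr0.
Qed.

Lemma sq_diag n (A : 'M[R]_n) : is_diag_mx A -> sq A = \sum_i A i i ^+ 2.
Proof.
move=> /is_diag_mxP hA; apply: eq_bigr => i _; rewrite (bigD1 i) //= big1 ?addr0 // => k hk.
by rewrite hA ?expr0n // eq_sym.
Qed.

Lemma sum_delta n (c : 'I_n -> R) j :
  \sum_i \sum_(k < 1) (c i * (delta_mx j 0 : 'cV[R]_n) i k) ^+ 2 = c j ^+ 2.
Proof.
rewrite (bigD1 j) //= big_ord1 big1 ?addr0.
  by rewrite mxE !eqxx mulr1.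
move=> i hi; rewrite big_ord1 mxE (negbTE hi) /= mulr0 expr0n //.
Qed.

Lemma spec_diag n (Le : 'M[R]_n) eps : is_diag_mx Le -> spec_norm_le Le eps ->
  forall j, `|Le j j| <= eps.
Proof.
move=> hd hs j; have := hs (delta_mx j 0); rewrite /vnorm /frob.
have -> : \sum_i \sum_j0 ((Le *m (delta_mx j 0 : 'cV[R]_n)) i j0) ^+ 2 = Le j j ^+ 2.
  rewrite -(@sum_delta n (fun i => Le i i) j). apply: eq_bigr => i _; apply: eq_bigr => k _.
  by rewrite mul_diagl.
have -> : \sum_i \sum_(j0 < 1) ((delta_mx j 0 : 'cV[R]_n) i j0) ^+ 2 = 1.
  rewrite -[1](expr1n _ 2) -(@sum_delta n (fun _ => 1) j); apply: eq_bigr => i _; apply: eq_bigr => k _.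
  by rewrite mul1r.
by rewrite sqrtr_sqr sqrtr1 mulr1.
Qed.

Lemma spec_clamp n (c : 'rV[R]_n) eps : 0 <= eps -> (forall i, `|c 0 i| <= eps) ->
  spec_norm_le (diag_mx c) eps.
Proof.
move=> he hc x; rewrite /vnorm /frob.
rewrite -[eps in eps * _](ger0_norm he) -sqrtr_sqr -sqrtrM ?sqr_ge0 //.
apply: ler_wsqrtr; rewrite mulr_sumr; apply: ler_sum => i _.
rewrite mulr_sumr; apply: ler_sum => k _.
rewrite mul_diagl ?diag_mx_is_diag // mxE eqxx mulr1n exprMn.
apply: ler_wpM2r; first exact: sqr_ge0.
have := hc i; rewrite ler_norml => /andP[h1 h2]; nra.
Qed.
End S.

Theorem theorem4 (R : rcfType) (N : nat) (S Q L Lo Lstar : 'M[R]_N) (eps : R) :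
  sym_mx S ->
  orth_mx Q -> is_diagonal L -> nonincr_diag L -> S = Q *m L *m Q^T ->
  is_diagonal Lo -> nonincr_diag Lo ->
  0 <= eps ->
  (* Lstar is the arg min over diagonal Le with ||Le||_2 <= eps of ||L - Lo - Le||_F *)
  is_diagonal Lstar -> spec_norm_le Lstar eps ->
  (forall Le : 'M[R]_N, is_diagonal Le -> spec_norm_le Le eps ->
     frob (L - Lo - Lstar) <= frob (L - Lo - Le)) ->
  Meps Lo eps (Q *m (Lo + Lstar) *m Q^T) /\
  (forall M : 'M[R]_N, Meps Lo eps M ->
     frob (S - Q *m (Lo + Lstar) *m Q^T) <= frob (S - M)).
Proof.
move=> hS [hQ1 hQ2] hL hLs -> hLo hLos he hLst hsst hmin.
split; first by exists Q, Lstar; split.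
set lam := fun k : nat => if (insub k : option 'I_N) is Some i then L i i else 0.
set lo := fun k : nat => if (insub k : option 'I_N) is Some i then Lo i i else 0.
have lamE (i : 'I_N) : lam i = L i i by rewrite /lam valK.
have loE (i : 'I_N) : lo i = Lo i i by rewrite /lo valK.
have hlam m k : (m <= k < N)%N -> lam k <= lam m.
  move=> /andP[hmk hk]; have hm : (m < N)%N by apply: leq_ltn_trans hk.
  have := lamE (Ordinal hm); have := lamE (Ordinal hk); rewrite /= => -> ->.
  exact: hLs.
have hlo m k : (m <= k < N)%N -> lo k <= lo m.
  move=> /andP[hmk hk]; have hm : (m < N)%N by apply: leq_ltn_trans hk.
  have := loE (Ordinal hm); have := loE (Ordinal hk); rewrite /= => -> ->.
  exact: hLos.
set c := \row_(i < N) clamp eps (L i i - Lo i i).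
set Lc := diag_mx c.
have hLc : frob (L - Lo - Lstar) <= frob (L - Lo - Lc).
  apply: hmin; first exact: diag_mx_is_diag.
  apply: spec_clamp => // i; rewrite mxE; exact: clamp_le.
have sqLc : sq (L - Lo - Lc) = \sum_(i < N) h eps lam lo i i.
  rewrite sq_diag; last first.
    apply/is_diag_mxP => i j hij.
    have hij' : i != j by [].
    by rewrite !mxE (is_diag_mxP hL) // (is_diag_mxP hLo) // (negbTE hij') mulr0n !subr0.
  apply: eq_bigr => i _; rewrite /h lamE loE !mxE eqxx mulr1n -clampG //.
have sqLs : sq (Q *m L *m Q^T - Q *m (Lo + Lstar) *m Q^T) = sq (L - Lo - Lstar).
  rewrite -(sq_mulr _ hQ1) -(sq_mull _ hQ1); congr sq.
  rewrite mulmxBl mulmxBr !mulmxA hQ2 !mul1mx -!mulmxA hQ2 !mulmx1.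
  by rewrite opprD addrA.
move=> M [V [Le [[hV1 hV2] hLe hsLe ->]]].
set D := Lo + Le.
set W := Q^T *m V.
have hD : is_diag_mx D.
  apply/is_diag_mxP => i j hij.
  by rewrite !mxE (is_diag_mxP hLo) // (is_diag_mxP hLe) // addr0.
have sqM : sq (Q *m L *m Q^T - V *m D *m V^T) = sq (L *m W - W *m D).
  rewrite -(sq_mulr _ hV1) -(sq_mull _ hQ1); congr sq.
  rewrite mulmxBl mulmxBr /W !mulmxA hQ2 !mul1mx -!mulmxA hV2 mulmx1.
  by rewrite !mulmxA.
have hWr (i : 'I_N) : \sum_j W i j ^+ 2 = 1.
  have : W *m W^T = 1%:M.
    by rewrite /W trmx_mul trmxK mulmxA -(mulmxA _ V) hV1 mulmx1 hQ2.
  move=> /(congr1 (fun A : 'M[R]_N => A i i)); rewrite !mxE eqxx mulr1n => <-.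
  by apply: eq_bigr => j _; rewrite !mxE expr2.
have hWc (j : 'I_N) : \sum_i W i j ^+ 2 = 1.
  have : W^T *m W = 1%:M.
    by rewrite /W trmx_mul trmxK mulmxA -(mulmxA _ Q) hQ1 mulmx1 hV2.
  move=> /(congr1 (fun A : 'M[R]_N => A j j)); rewrite !mxE eqxx mulr1n => <-.
  by apply: eq_bigr => i _; rewrite !mxE expr2.
have hE (j : 'I_N) : `|Le j j| <= eps by exact: spec_diag.
have := core he hlam hlo hWr hWc hE.
rewrite -sqLc => hcore.
rewrite /frob.
apply: (le_trans _ (ler_wsqrtr _)); last first.
  apply: (le_trans hcore); rewrite -/(sq _) sqM.
  rewrite le_eqVlt; apply/orP; left; apply/eqP.
  apply: eq_bigr => i _; apply: eq_bigr => j _.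
  rewrite mxBE (@mul_diagl R N N L W i j hL) (@mul_diagr R N W D i j hD) lamE loE.
  have -> : D j j = Lo j j + Le j j by rewrite /D mxE.
  by ring.
rewrite -/(sq _) sqLs -/(sq (L - Lo - Lc)).
exact: hLc.
Qed.
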